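(* Let $e\geq 2$ and $N=\langle\sigma\rangle$ cyclic of order $2^e$. Every transitive subgroup $G$ of $\mathrm{Hol}(N)$ has an element of order $2^{e-1}$. Moreover, if $G$ has no element of order $2^e$, then $b-1\equiv 2v\pmod 4$ for all $[\sigma^v,\varphi_b]\in G$, and in particular $\mathrm{Stab}_G(1_N)\subseteq\langle\varphi_5\rangle$.
   Context: For an odd integer $a$, $\varphi_a\in\mathrm{Aut}(N)$ is $\sigma\mapsto\sigma^a$. Elements of $\mathrm{Hol}(N)=N\rtimes\mathrm{Aut}(N)$ are written $[\sigma^u,\varphi_a]$ with $[\sigma^u,\varphi_a][\sigma^v,\varphi_b]=[\sigma^{u+va},\varphi_{ab}]$. $\mathrm{Hol}(N)$ acts on $N$ by $[\sigma^u,\varphi_a]\cdot\sigma^v=\sigma^{u+av}$; a subgroup is transitive if it acts transitively on $N$; $\mathrm{Stab}_G(1_N)=G\cap\mathrm{Aut}(N)$. *)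

(* Defs.v *)
From mathcomp Require Import all_boot all_order all_algebra all_fingroup all_solvable.
Set Implicit Arguments. Unset Strict Implicit. Unset Printing Implicit Defensive.
Import GRing.Theory.

(* N = <sigma> cyclic of order 2^e is modelled as the additive group 'Z_(2^e)
   (sigma^u <-> u).  Hol(N) is realised as its (faithful) permutation
   representation on N: [sigma^u, phi_a] is the permutation x |-> u + a x
   (a odd), i.e. [sigma^u,phi_a] . sigma^v = sigma^(u + a v). *)

Definition ZN (e : nat) := 'Z_(2 ^ e).

Definition is_hol_elt (e : nat) (s : {perm ZN e}) (u a : ZN e) : Prop :=
  odd (val a) /\ forall x : ZN e, s x = (u + a * x)%R.

Definition Hol (e : nat) : {set {perm ZN e}} :=
  [set s : {perm ZN e} | [exists u : ZN e, exists a : ZN e,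
      odd (val a) && [forall x : ZN e, s x == (u + a * x)%R]]].

Definition is_phi (e : nat) (s : {perm ZN e}) (a : nat) : Prop :=
  forall x : ZN e, s x = (a%:R * x)%R.

(* Main.v *)
Require Import Defs.
From Stdlib Require Import Classical.
From mathcomp Require Import all_boot all_order all_algebra all_fingroup all_solvable.
From mathcomp Require Import ring zify.
Import GRing.Theory.

Fixpoint geo (A n : nat) : nat := if n is n'.+1 then 1 + A * geo A n' else 0.

Lemma geo_add A m n : geo A (m + n) = geo A m + A ^ m * geo A n.
Proof.
elim: m => [|m IH] /=; first by rewrite expn0 mul1n.
rewrite IH expnS; ring.
Qed.

Lemma pow4 A t k : A = 4 * t + 1 -> exists q, A ^ (2 ^ k) = 1 + 2 ^ k.+2 * q.
Proof.
move=> ->; elim: k => [|k [q IH]]; first by exists t; rewrite expn0 expn1 addnC.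
exists (q + 2 ^ k.+1 * q * q).
rewrite expnSr expnM IH !expnS; ring.
Qed.

Lemma geo_pow A t k : A = 4 * t + 1 -> exists w, geo A (2 ^ k) = 2 ^ k * (2 * w + 1).
Proof.
move=> HA; elim: k => [|k [w IH]]; first by exists 0; rewrite expn0 /= muln0.
have [q Hq] := @pow4 A t k HA.
exists (2 * w * (2 ^ k * q) + w + 2 ^ k * q).
rewrite expnS mul2n -addnn geo_add IH Hq !expnS; ring.
Qed.

Lemma odd21 W : odd (2 * W + 1).
Proof. by rewrite addn1 /= mul2n odd_double. Qed.

Definition Hrep e (g : {perm ZN e}) (U A : nat) :=
  forall x : ZN e, g x = (U%:R + A%:R * x)%R.

Lemma two_gt1 e : 1 <= e -> 1 < 2 ^ e.
Proof. by move=> he; rewrite -{1}(expn0 2) ltn_exp2l. Qed.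

Lemma natr_eq0 e n : 1 <= e -> ((n%:R : ZN e)%R == 0%R) = (2 ^ e %| n).
Proof.
move=> he; rewrite -val_eqE /= val_Zp_nat ?two_gt1 //.
Qed.

Lemma rep_iter e g U A n x : @Hrep e g U A ->
  (g ^+ n)%g x = (((A ^ n)%:R)%R * x + ((U * geo A n)%:R)%R)%R.
Proof.
move=> Hg; rewrite permX; elim: n => [|n IH] /=.
  by rewrite expn0 muln0 mul1r addr0.
rewrite IH Hg expnS. rewrite !(natrD, natrM); ring.
Qed.

Lemma natr_pow2_0 e m : 1 <= e -> 2 ^ e %| m -> (m%:R : ZN e)%R = 0%R.
Proof. by move=> he hm; apply/eqP; rewrite natr_eq0. Qed.

Lemma ord_hol e j (g : {perm ZN e}) U A W t : j <= 2 -> j < e -> Hrep e g U A ->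
  A = 4 * t + 1 -> U = 2 ^ j * (2 * W + 1) -> #[g]%g = 2 ^ (e - j).
Proof.
move=> hj2 hj Hg HA HU.
have he : 1 <= e by lia.
have Ee : 2 ^ e = 2 ^ j * 2 ^ (e - j) by rewrite -expnD subnKC // ltnW.
have h1 : (g ^+ (2 ^ (e - j)))%g = 1%g.
  apply/permP => x; rewrite perm1 (@rep_iter _ _ _ _ _ _ Hg).
  have [q Hq] := @pow4 A t (e - j) HA.
  have [w Hw] := @geo_pow A t (e - j) HA.
  rewrite Hq natrD (@natr_pow2_0 e (2 ^ (e - j).+2 * q)) //; last first.
    apply: dvdn_mulr; rewrite dvdn_exp2l //. move: hj hj2; clear; lia.
  rewrite (@natr_pow2_0 e (U * _)) //; last first.
    by rewrite HU Hw Ee dvdn_mul // dvdn_mulr.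
  by rewrite addr0; ring.
have [k Ek] : exists k, e - j = k.+1 by exists (e - j).-1; lia.
have h2 : (g ^+ (2 ^ k))%g != 1%g.
  apply/eqP => H; have := congr1 (fun s : {perm ZN e} => s 0%R) H.
  rewrite perm1 (@rep_iter _ _ _ _ _ _ Hg) mulr0 add0r => /eqP; rewrite natr_eq0 //.
  have [w2 Hw2] := @geo_pow A t k HA.
  have -> : U * geo A (2 ^ k) = 2 ^ (j + k) * ((2 * W + 1) * (2 * w2 + 1)).
    by rewrite HU Hw2 expnD; ring.
  have -> : 2 ^ e = 2 ^ (j + k) * 2 by rewrite -expnSr; congr (2 ^ _); lia.
  by rewrite dvdn_pmul2l ?expn_gt0 // dvdn2 ssrnat.oddM !odd21.
have : #[g]%g %| 2 ^ (e - j) by rewrite order_dvdn h1.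
case/(dvdn_pfactor _ _ (isT : prime 2)) => m hm Hm.
case: (ltnP m (e - j)) => hm2; last by rewrite Hm; congr (2 ^ _); lia.
case/negP: h2; rewrite -order_dvdn Hm dvdn_exp2l //; lia.
Qed.

Section IntPart.
Local Open Scope ring_scope.
Lemma five_odd k : exists t : int, (5%:Z) ^+ k = 2 * t + 1.
Proof.
elim: k => [|k [t IH]]; first by exists 0; rewrite expr0.
by exists (5 * t + 2); rewrite exprS IH; ring.
Qed.

Lemma five_pow j : exists w : int, (5%:Z) ^+ (2 ^ j) = 1 + 2 ^+ j.+2 * (2 * w + 1).
Proof.
elim: j => [|j [w IH]]; first by exists 0; rewrite expn0 expr1.
exists (w + 2 ^+ j * (2 * w + 1) ^+ 2).
rewrite expnSr exprM IH !exprS; ring.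
Qed.

Lemma gen d (A : int) : (exists t, A = 4 * t + 1) ->
  exists k : nat, exists q : int, (5%:Z) ^+ k - A = 2 ^+ d.+2 * q.
Proof.
case=> t HA; elim: d => [|d [k [q E]]].
  by exists 0%N, (- t); rewrite HA expr0 !exprS expr0; ring.
have Eq := divz_eq q 2.
have r0 : (0 <= q %% 2)%Z by rewrite modz_ge0.
have r1 : (q %% 2 < 2)%Z by rewrite ltz_pmod.
have EA : A = 5 ^+ k - 2 ^+ d.+2 * q by rewrite -E; ring.
have [Er|Er] : (q %% 2)%Z = 0 \/ (q %% 2)%Z = 1 by lia.
  exists k, (q %/ 2)%Z; rewrite EA {1}Eq Er; rewrite !exprS; ring.
have [t' Et] := five_odd k.
have [w Ew] := five_pow d.
exists (k + 2 ^ d)%N, ((q %/ 2)%Z + 2 * t' * w + t' + w + 1).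
rewrite EA {1}Eq Er exprD Ew Et !exprS; ring.
Qed.

Lemma intrX (R : pzRingType) (z : int) k : ((z ^+ k)%:~R : R) = z%:~R ^+ k.
Proof. by elim: k => [|k IH]; rewrite ?expr0 ?exprS ?intrM ?IH. Qed.
End IntPart.

Lemma oddE n : odd n -> n = 2 * n./2 + 1.
Proof. by move=> h; rewrite -{1}(odd_double_half n) h -mul2n addnC. Qed.

Lemma oddP n : odd n <-> n %% 2 = 1.
Proof. by rewrite modn2; case: (odd n). Qed.

Lemma comp_rep e g h U A V B : Hrep e g U A -> Hrep e h V B ->
  Hrep e (g * h)%g (V + B * U) (B * A).
Proof.
move=> Hg Hh x; rewrite permM Hg Hh !(natrD, natrM); ring.
Qed.

Lemma hol_rep e g : g \in Hol e ->
  exists u a : ZN e, odd (val a) /\ forall x, g x = (u + a * x)%R.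
Proof.
rewrite inE => /existsP [u /existsP [a /andP [oa /forallP H]]].
by exists u, a; split => // x; apply/eqP.
Qed.

Lemma hol_rep2 e g : g \in Hol e ->
  exists U A, odd A /\ Hrep e g U A /\ U = val (g 0%R).
Proof.
case/hol_rep => u [a [oa H]]; exists (val u), (val a); split => //; split.
  by move=> x; rewrite !natr_Zp H.
by rewrite H mulr0 addr0.
Qed.

Lemma valZ e n : 1 <= e -> val ((n%:R)%R : ZN e) = n %% 2 ^ e.
Proof. by move=> he; exact: (val_Zp_nat (two_gt1 e he) n). Qed.

Theorem lemma5p1 (e : nat) (he : 2 <= e) (G : {group {perm ZN e}}) :
  G \subset Hol e ->
  [transitive G, on [set: ZN e] | 'P] ->
  (exists2 g, g \in G & #[g]%g = 2 ^ e.-1)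
  /\
  (~ (exists2 g, g \in G & #[g]%g = 2 ^ e) ->
     (forall g, g \in G -> forall v b : ZN e, is_hol_elt g v b ->
        (val b).-1 = (2 * val v) %[mod 4])
     /\
     (forall g, g \in G -> g 0%R = 0%R ->
        exists2 f : {perm ZN e}, is_phi f 5 & g \in <[f]>%g)).
Proof.
move=> sGH trG.
have he1 : 1 <= e by lia.
have Hgt : 1 < 2 ^ e by apply: two_gt1.
have H4 : 4 <= 2 ^ e by rewrite -[4]/(2 ^ 2) leq_exp2l.
have hol g : g \in G -> exists U A, odd A /\ Hrep e g U A /\ U = val (g 0%R).
  by move=> gG; apply: hol_rep2; apply: (subsetP sGH).
have orb (t : ZN e) : exists2 g, g \in G & g 0%R = t.
  have : t \in orbit 'P G 0%R by rewrite (atransP trG) ?inE.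
  by case/orbitP => g gG <-; exists g.
have [h hG h0] := orb (1%:R)%R.
have [C [oC HC]] : exists C, odd C /\ Hrep e h 1 C.
  have [U [A [oA [HA EU]]]] := hol h hG.
  exists A; split => //; rewrite -(_ : U = 1) //.
  by rewrite EU h0 valZ // modn_small.
pose P1 := exists2 g, g \in G & exists U A, Hrep e g U A /\ odd U /\ A %% 4 = 1.
have full : P1 -> exists2 g, g \in G & #[g]%g = 2 ^ e.
  case=> g gG [U [A [HA [oU A4]]]]; exists g => //.
  rewrite -[in RHS](subn0 e); apply: (@ord_hol e 0 g U A (U./2) (A %/ 4)) => //.
    by rewrite {1}(divn_eq A 4) A4 mulnC.
  by rewrite expn0 mul1n -oddE.
have P2 : ~ P1 -> forall g, g \in G -> forall v b : ZN e, is_hol_elt g v b ->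
        (val b).-1 = (2 * val v) %[mod 4].
  move=> nP1 g gG v b [ob Hg].
  have Hr : Hrep e g (val v) (val b) by move=> x; rewrite Hg !natr_Zp.
  move/oddP: ob => ob; move/oddP: oC => oC'.
  have [b4|b4] : val b %% 4 = 1 \/ val b %% 4 = 3 by lia.
    case/boolP: (odd (val v)) => ov.
      by case: nP1; exists g => //; exists (val v), (val b).
    have ov' : val v %% 2 = 0 by rewrite modn2 (negbTE ov).
    lia.
  case/boolP: (odd (val v)) => ov.
    by move/oddP: ov => ov; lia.
  have ov' : val v %% 2 = 0 by rewrite modn2 (negbTE ov).
  have [C4|C4] : C %% 4 = 1 \/ C %% 4 = 3 by lia.
    by case: nP1; exists h => //; exists 1, C.
  case: nP1; exists (h * g)%g; first by rewrite groupM.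
  exists (val v + val b * 1), (val b * C); split; first exact: comp_rep.
  split; first by apply/oddP; lia.
  by rewrite -modnMm b4 C4.
case: (classic P1) => [p1|np1].
  have [g gG og] := full p1; split.
    exists (g ^+ 2)%g; first by rewrite groupX.
    have E2 : 2 ^ e = 2 * 2 ^ e.-1 by rewrite -expnS prednK.
    by rewrite orderXdiv og E2 ?mulKn // dvdn_mulr.
  by move=> nP; case: nP; exists g.
split.
  have [g gG g0] := orb (2%:R)%R.
  have [U [A [oA [HA EU]]]] := hol g gG.
  have U2 : U = 2 by rewrite EU g0 valZ // modn_small //; lia.
  move/oddP: (oA) => oA'; move/oddP: (oC) => oC'.
  have [C4|C4] : C %% 4 = 1 \/ C %% 4 = 3 by lia.
    by case: np1; exists h => //; exists 1, C.
  have [A4|A4] : A %% 4 = 1 \/ A %% 4 = 3 by lia.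
    exists g => //; rewrite -subn1.
    apply: (@ord_hol e 1 g U A 0 (A %/ 4)) => //.
      by rewrite {1}(divn_eq A 4) A4 mulnC.
  case: np1; exists (h * g)%g; first by rewrite groupM.
  exists (U + A * 1), (A * C); split; first exact: comp_rep.
  split; first by apply/oddP; lia.
  by rewrite -modnMm A4 C4.
move=> _; split; first exact: P2 np1.
move=> g gG g0.
have [u [a [oa Hg]]] := @hol_rep e g (subsetP sGH g gG).
have u0 : u = 0%R by rewrite -g0 Hg mulr0 addr0.
have hg : is_hol_elt g 0%R a by split => // x; rewrite Hg u0.
have := P2 np1 g gG 0%R a hg; rewrite /= muln0 => a0.
move/oddP: (oa) => oa'.
have [t Ht] : exists t : int, Posz (val a) = (4 * t + 1)%R.
  have a0' : (val a).-1 %% 4 = 0 := a0.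
  by exists (Posz (val a %/ 4)); lia.
have [k [q Eq]] := @gen (e - 2) _ (ex_intro _ t Ht).
have Ee : (e - 2).+2 = e by lia.
rewrite Ee in Eq.
have u5 : (5%:R : ZN e)%R \is a GRing.unit.
  have := @unitZpE (2 ^ e) 5 (two_gt1 e he1).
  by rewrite coprimeXl.
pose f := perm (mulrI u5).
exists f; first by move=> x; rewrite permE.
apply/cycleP; exists k; apply/permP => x; rewrite permX.
have It n : iter n f x = ((5%:R : ZN e) ^+ n * x)%R.
  elim: n => [|n IH] /=; first by rewrite expr0 mul1r.
  by rewrite IH permE exprS mulrA.
rewrite Hg u0 add0r It; congr (_ * _)%R.
have := congr1 (fun z : int => (z%:~R : ZN e)%R) Eq.
rewrite /= intrB intrM !intrX => E.
have E1 : (((5%:R : ZN e) ^+ k - (val a)%:R) = (2 ^ e)%:R * q%:~R)%R.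
  by rewrite natrX; exact: E.
rewrite (@natr_pow2_0 e (2 ^ e)) // mul0r natr_Zp in E1.
by apply/eqP; rewrite eq_sym -subr_eq0 E1.
Qed.
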